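(* The map $G$ has sensitive dependence on initial conditions on $(\mathcal{X},d)$, with a constant of sensitivity at least $2^{\mathsf{N}-1}$: there is $\delta\ge 2^{\mathsf{N}-1}$ such that for every $x\in\mathcal{X}$ and every neighborhood $V$ of $x$ there exist $y\in V$ and $n\ge0$ with $d(G^n(x),G^n(y))>\delta$.
   Context: Fix an integer $\mathsf{N}\ge 1$ and write $\llbracket a;b\rrbracket=\{a,a+1,\dots,b\}$. Let $f:\mathbb{Z}/4\mathbb{Z}\to\mathbb{Z}/4\mathbb{Z}$, $f(x)=x+1 \pmod 4$, with $f^{-1}(x)=x-1\pmod 4$ and $f^0=\mathrm{id}$. Let $\mathrm{sign}(x)=1$ if $x>0$, $0$ if $x=0$, $-1$ if $x<0$. For $k\in\llbracket -\mathsf{N};\mathsf{N}\rrbracket$ define $f_k:(\mathbb{Z}/4\mathbb{Z})^{\mathsf{N}}\to(\mathbb{Z}/4\mathbb{Z})^{\mathsf{N}}$ by $f_k(C_1,\dots,C_{\mathsf{N}})=(C_1,\dots,C_{|k|-1},f^{\mathrm{sign}(k)}(C_{|k|}),\dots,f^{\mathrm{sign}(k)}(C_{\mathsf{N}}))$ (so $f_0$ is the identity). Folding sequences are $F=(F^j)_{j\in\mathbb{N}}\in\llbracket -\mathsf{N};\mathsf{N}\rrbracket^{\mathbb{N}}$; let $i(F)=F^0$ and let $\sigma$ be the shift, $\sigma((F^j)_{j})=(F^{j+1})_{j}$. A finite sequence $(k_1,\dots,k_n)$ is identified with $(k_1,\dots,k_n,0,0,\dots)$. On $\check{\mathcal{X}}=(\mathbb{Z}/4\mathbb{Z})^{\mathsf{N}}\times\llbracket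 -\mathsf{N};\mathsf{N}\rrbracket^{\mathbb{N}}$ define $G((C,F))=(f_{i(F)}(C),\sigma(F))$. SAW requirement: for $C\in(\mathbb{Z}/4\mathbb{Z})^{\mathsf{N}}$ let $p(C)=(X_0,\dots,X_{\mathsf{N}})\in(\mathbb{Z}^2)^{\mathsf{N}+1}$ with $X_0=(0,0)$ and $X_i=X_{i-1}+v(C_i)$, where $v(0)=(1,0)$, $v(1)=(0,-1)$, $v(2)=(-1,0)$, $v(3)=(0,1)$. $C$ satisfies the SAW requirement iff the points $X_0,\dots,X_{\mathsf{N}}$ are pairwise distinct. Let $\mathfrak{C}_{\mathsf{N}}$ be the set of $C\in(\mathbb{Z}/4\mathbb{Z})^{\mathsf{N}}$ for which there exist $n\ge1$ and $k_1,\dots,k_n\in\llbracket -\mathsf{N};\mathsf{N}\rrbracket$ such that $C$ is the first component of $G^n(((0,\dots,0),(k_1,\dots,k_n)))$ and, for every $i\le n$, the first component of $G^i(((0,\dots,0),(k_1,\dots,k_n)))$ satisfies the SAW requirement. Let $\mathcal{X}=\mathfrak{C}_{\mathsf{N}}\times\llbracket -\mathsf{N};\mathsf{N}\rrbracket^{\mathbb{N}}$ with metric $d((C,F),(\check C,\check F))=d_C(C,\check C)+d_F(F,\check F)$, where $d_C(C,\check C)=\sum_{k=1}^{\mathsf{N}}\delta(C_k,\check C_k)2^{\mathsf{N}-k}$ ($\delta(a,b)=0$ if $a=b$, $1$ otherwise) and $d_F(F,\check F)=\frac{9}{2\mathsf{N}}\sum_{k=0}^{\infty}\frac{|F^k-\check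 F^k|}{10^{k+1}}$. The paper regards $G$ as a self-map of $\mathcal{X}$. *)

(* Defs.v *)
From Stdlib Require Import Reals ZArith Arith List Lia.
From Coquelicot Require Import Coquelicot.
Open Scope R_scope.

(* Encoding conventions.
   - Z/4Z is represented by its canonical representatives {0,1,2,3} in Z.
   - A configuration C in (Z/4Z)^N is a function cfg := nat -> Z, where C i
     is the i-th coordinate C_i for 1 <= i <= N; coordinates outside 1..N are
     irrelevant and are normalised to 0 (see [wf_cfg]).
   - A folding sequence F in [[-N;N]]^Nat is a function nat -> Z with values
     in [-N, N]. *)
Definition cfg := (nat -> Z)%type.
Definition fseq := (nat -> Z)%type.

Definition wf_cfg (N : nat) (C : cfg) : Prop :=
  forall i, ((1 <= i <= N)%nat -> (0 <= C i < 4)%Z) /\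
            (~ (1 <= i <= N)%nat -> C i = 0%Z).

Definition valid_fseq (N : nat) (F : fseq) : Prop :=
  forall j, (- Z.of_nat N <= F j <= Z.of_nat N)%Z.

Definition fpow (s x : Z) : Z := ((x + s) mod 4)%Z.

Definition f_k (N : nat) (k : Z) (C : cfg) : cfg :=
  fun i => if (andb (andb (1 <=? i)%nat (i <=? N)%nat) (Z.to_nat (Z.abs k) <=? i)%nat)
           then fpow (Z.sgn k) (C i) else C i.

Definition zero_cfg : cfg := fun _ => 0%Z.

(* finite folding sequence (k_1,...,k_n) identified with (k_1,...,k_n,0,0,...) *)
Definition fseq_of_list (l : list Z) : fseq := fun j => nth j l 0%Z.

Definition G (N : nat) (x : cfg * fseq) : cfg * fseq :=
  (f_k N (snd x 0%nat) (fst x), fun j => snd x (S j)).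

Definition Giter (N n : nat) (x : cfg * fseq) : cfg * fseq :=
  Nat.iter n (G N) x.

Definition v (c : Z) : Z * Z :=
  match c with
  | 0%Z => (1, 0)%Z
  | 1%Z => (0, -1)%Z
  | 2%Z => (-1, 0)%Z
  | _ => (0, 1)%Z
  end.

Fixpoint pos (C : cfg) (i : nat) : Z * Z :=
  match i with
  | O => (0, 0)%Z
  | S i' => let P := pos C i' in let w := v (C (S i')) in
            (fst P + fst w, snd P + snd w)%Z
  end.

Definition SAW (N : nat) (C : cfg) : Prop :=
  forall i j, (i <= N)%nat -> (j <= N)%nat -> pos C i = pos C j -> i = j.

Definition frakC (N : nat) (C : cfg) : Prop :=
  exists ks : list Z,
    (1 <= length ks)%nat /\
    List.Forall (fun k => (- Z.of_nat N <= k <= Z.of_nat N)%Z) ks /\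
    C = fst (Giter N (length ks) (zero_cfg, fseq_of_list ks)) /\
    (forall i, (1 <= i <= length ks)%nat ->
       SAW N (fst (Giter N i (zero_cfg, fseq_of_list ks)))).

Definition inX (N : nat) (x : cfg * fseq) : Prop :=
  frakC N (fst x) /\ valid_fseq N (snd x).

Fixpoint dC_aux (N : nat) (C C' : cfg) (k : nat) : R :=
  match k with
  | O => 0
  | S k' => dC_aux N C C' k' +
            (if Z.eqb (C k) (C' k) then 0 else 1) * pow 2 (N - k)%nat
  end.
Definition dC (N : nat) (C C' : cfg) : R := dC_aux N C C' N.

Definition dF (N : nat) (F F' : fseq) : R :=
  9 / (2 * INR N) *
  Series (fun k => IZR (Z.abs (F k - F' k)) / 10 ^ (S k)).

Definition d (N : nat) (x y : cfg * fseq) : R :=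
  dC N (fst x) (fst y) + dF N (snd x) (snd y).

Definition nbhd (N : nat) (x : cfg * fseq) (V : cfg * fseq -> Prop) : Prop :=
  exists eps, 0 < eps /\ forall y, inX N y -> d N x y < eps -> V y.

(* Main.v *)
Require Import Defs.
From Stdlib Require Import Reals ZArith Arith List.
From Coquelicot Require Import Coquelicot.
From Stdlib Require Import Lia Lra.
Open Scope R_scope.

Definition single (m : nat) (a : R) : nat -> R := fun k => if Nat.eqb k m then a else 0.

Lemma is_series_zero : is_series (fun _ : nat => 0) 0.
Proof.
  assert (H := is_series_scal_r 0 _ _ (is_series_geom (1/2) ltac:(rewrite Rabs_pos_eq; lra))).
  rewrite Rmult_0_r in H.
  eapply is_series_ext; [|exact H]. intros; simpl; ring.
Qed.

Lemma is_series_single m a : is_series (single m a) a.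
Proof.
  induction m.
  - apply is_series_decr_1. unfold single. simpl.
    match goal with |- is_series _ ?l => replace l with 0 by (change (0 = a + - a); ring) end.
    eapply is_series_ext; [|exact is_series_zero]. intros; reflexivity.
  - apply is_series_decr_1. unfold single at 2. simpl.
    match goal with |- is_series _ ?l => replace l with a by (change (a = a + - 0); ring) end.
    exact IHm.
Qed.

Lemma pow10_ge n : 1 + INR n <= 10 ^ n.
Proof.
  induction n. simpl. lra. rewrite S_INR. simpl pow. pose proof (pos_INR n). lra.
Qed.

Lemma Giter_snd N n C F j : snd (Giter N n (C, F)) j = F (j + n)%nat.
Proof.
  revert j; induction n; intros j; simpl.
  - f_equal; lia.
  - change (snd (Giter N n (C, F)) (S j) = F (j + S n)%nat).
    rewrite IHn. f_equal; lia.
Qed.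

Lemma Giter_S N n x : Giter N (S n) x = G N (Giter N n x).
Proof. reflexivity. Qed.

Lemma Giter_fst_agree N n C F F' :
  (forall j, (j < n)%nat -> F j = F' j) ->
  fst (Giter N n (C, F)) = fst (Giter N n (C, F')).
Proof.
  induction n; intros H; simpl; auto.
  change (f_k N (snd (Giter N n (C, F)) 0%nat) (fst (Giter N n (C, F))) =
          f_k N (snd (Giter N n (C, F')) 0%nat) (fst (Giter N n (C, F')))).
  rewrite !Giter_snd, IHn by (intros; apply H; lia).
  rewrite H by lia. reflexivity.
Qed.

Lemma dC_aux_refl N C k : dC_aux N C C k = 0.
Proof. induction k; simpl; auto. rewrite IHk, Z.eqb_refl. ring. Qed.

Lemma dC_aux_ge0 N C C' k : 0 <= dC_aux N C C' k.
Proof.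
  induction k; simpl. lra.
  apply Rplus_le_le_0_compat; auto. apply Rmult_le_pos.
  destruct Z.eqb; lra. apply pow_le; lra.
Qed.

Lemma dC_aux_ge1 N C C' k : (1 <= k)%nat ->
  (if Z.eqb (C 1%nat) (C' 1%nat) then 0 else 1) * 2 ^ (N - 1) <= dC_aux N C C' k.
Proof.
  induction k; intros Hk. lia.
  destruct k.
  - simpl. lra.
  - simpl dC_aux at 1. pose proof (IHk ltac:(lia)).
    assert (0 <= (if Z.eqb (C (S (S k))) (C' (S (S k))) then 0 else 1) * 2 ^ (N - S (S k))).
    { apply Rmult_le_pos. destruct (Z.eqb (C (S (S k))) (C' (S (S k)))); lra. apply pow_le; lra. }
    simpl in H. lra.
Qed.

Definition h (k : Z) : Z := if Z.eqb k 1 then 0%Z else 1%Z.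

Lemma h_neq k : h k <> k.
Proof. unfold h. destruct (Z.eqb_spec k 1); lia. Qed.

Lemma h_bound N k : (1 <= N)%nat -> (- Z.of_nat N <= k <= Z.of_nat N)%Z ->
  (Z.abs (k - h k) <= Z.of_nat N + 1)%Z.
Proof. unfold h. destruct (Z.eqb_spec k 1); lia. Qed.

Lemma coord1_differ N a c C : (1 <= N)%nat -> C 1%nat = c ->
  Z.eqb (f_k N a C 1%nat) (f_k N (h a) C 1%nat) = false.
Proof.
  intros HN Hc. apply Z.eqb_neq. unfold f_k, h.
  replace (1 <=? N)%nat with true by (symmetry; apply Nat.leb_le; lia).
  simpl andb. rewrite Hc.
  destruct (Z.eqb_spec a 1).
  - subst. simpl. unfold fpow. Z.div_mod_to_equations; lia.
  - simpl. unfold fpow. simpl.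
    destruct (Nat.leb_spec (Z.to_nat (Z.abs a)) 1).
    + assert (a = (-1)%Z \/ a = 0%Z) as [-> | ->] by lia; simpl; Z.div_mod_to_equations; lia.
    + Z.div_mod_to_equations; lia.
Qed.

Theorem mainTheorem6 (N : nat) (HN : (1 <= N)%nat) :
  exists delta : R, 2 ^ (N - 1) <= delta /\
    forall x : cfg * fseq, inX N x ->
    forall V : cfg * fseq -> Prop, nbhd N x V ->
    exists y : cfg * fseq, inX N y /\ V y /\
      exists n : nat, d N (Giter N n x) (Giter N n y) > delta.
Proof.
  exists (2 ^ (N - 1)). split. lra.
  intros [C F] [HC HF] V [eps [Heps HV]]. simpl in HC, HF.
  destruct (INR_archimed 1 (18 / eps) ltac:(lra)) as [m Hm].
  rewrite Rmult_1_r in Hm.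
  set (F' := fun j => if orb (Nat.eqb j m) (Nat.eqb j (S m)) then h (F j) else F j).
  assert (HNpos : 0 < INR N) by (apply lt_0_INR; lia).
  exists (C, F'). split; [|split].
  - split; simpl; auto. intros j. unfold F'.
    destruct orb; auto. unfold h; destruct Z.eqb; lia.
  - apply HV.
    + split; simpl; auto. intros j. unfold F'.
      destruct orb; auto. unfold h; destruct Z.eqb; lia.
    + unfold d, dC; simpl. rewrite dC_aux_refl, Rplus_0_l.
      unfold dF.
      set (a := IZR (Z.abs (F m - h (F m))) / 10 ^ S m).
      set (b := IZR (Z.abs (F (S m) - h (F (S m)))) / 10 ^ S (S m)).
      assert (Hs : Series (fun k => IZR (Z.abs (F k - F' k)) / 10 ^ S k) = a + b).
      { apply is_series_unique.
        eapply is_series_ext; [|exact (is_series_plus _ _ _ _ (is_series_single m a) (is_series_single (S m) b))].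
        intros k. unfold single, F', a, b. simpl plus.
        destruct (Nat.eqb_spec k m); destruct (Nat.eqb_spec k (S m)); subst; try lia; simpl.
        all: match goal with |- plus ?x ?y = ?z => change (x + y = z) end.
        - ring.
        - ring.
        - rewrite Z.sub_diag. simpl. unfold Rdiv. ring. }
      rewrite Hs.
      assert (Ha : IZR (Z.abs (F m - h (F m))) <= INR N + 1).
      { rewrite INR_IZR_INZ, <- plus_IZR. apply IZR_le. apply h_bound; auto. }
      assert (Hb : IZR (Z.abs (F (S m) - h (F (S m)))) <= INR N + 1).
      { rewrite INR_IZR_INZ, <- plus_IZR. apply IZR_le. apply h_bound; auto. }
      assert (Hp : 1 + INR m <= 10 ^ m) by apply pow10_ge.
      assert (Hpos : 0 < 10 ^ m) by (apply pow_lt; lra).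
      assert (Ha0 : 0 <= IZR (Z.abs (F m - h (F m)))) by (apply IZR_le; lia).
      assert (Hb0 : 0 <= IZR (Z.abs (F (S m) - h (F (S m))))) by (apply IZR_le; lia).
      assert (HN1 : 1 <= INR N) by (apply (le_INR 1); lia).
      unfold a, b. simpl pow.
      assert (Hk : 18 < eps * 10 ^ m).
      { apply (Rmult_lt_compat_l eps) in Hm; auto.
        unfold Rdiv in Hm. field_simplify in Hm; [nra | lra]. }
      apply Rle_lt_trans with (18 / 10 ^ m).
      * unfold Rdiv. apply Rmult_le_reg_r with (2 * INR N * (10 * (10 * 10 ^ m))).
        { apply Rmult_lt_0_compat; [lra|]. lra. }
        field_simplify; [lra | lra | split; lra].
      * apply Rmult_lt_reg_r with (10 ^ m); auto. unfold Rdiv.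
        rewrite Rmult_assoc, Rinv_l by lra. lra.
  - exists (S m). rewrite !Giter_S.
    unfold d, G. cbn [fst snd].
    rewrite (Giter_fst_agree N m C F' F); [|intros j Hj; unfold F';
      destruct (Nat.eqb_spec j m); destruct (Nat.eqb_spec j (S m)); simpl; auto; lia].
    rewrite Giter_snd. rewrite Giter_snd. simpl (0 + m)%nat.
    unfold F' at 1. rewrite Nat.eqb_refl. simpl orb.
    set (C0 := fst (Giter N m (C, F))).
    assert (H1 := coord1_differ N (F m) (C0 1%nat) C0 HN eq_refl).
    assert (HdC := dC_aux_ge1 N (f_k N (F m) C0) (f_k N (h (F m)) C0) N HN).
    rewrite H1 in HdC. unfold dC.
    assert (HdF : 0 < dF N (fun j => snd (Giter N m (C, F)) (S j))
                           (fun j => snd (Giter N m (C, F')) (S j))).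
    { unfold dF.
      set (c := IZR (Z.abs (F (S m) - h (F (S m)))) / 10).
      assert (Hs : Series (fun k => IZR (Z.abs (snd (Giter N m (C, F)) (S k) - snd (Giter N m (C, F')) (S k))) / 10 ^ S k) = c).
      { apply is_series_unique.
        eapply is_series_ext; [|exact (is_series_single 0 c)].
        intros k. rewrite !Giter_snd. unfold single, F', c.
        destruct k.
        - rewrite (proj2 (Nat.eqb_eq (1+m) (S m)) ltac:(lia)), Bool.orb_true_r.
          simpl. field.
        - rewrite (proj2 (Nat.eqb_neq (S (S k)+m) m) ltac:(lia)), (proj2 (Nat.eqb_neq (S (S k)+m) (S m)) ltac:(lia)).
          simpl orb. rewrite Z.sub_diag. simpl. unfold Rdiv. ring. }
      rewrite Hs. unfold c. apply Rmult_lt_0_compat.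
      - apply Rmult_lt_0_compat; [lra|]. apply Rinv_0_lt_compat; lra.
      - apply Rmult_lt_0_compat; [|lra]. apply IZR_lt.
        pose proof (h_neq (F (S m))). lia. }
    change (fst (Giter N m (C, F))) with C0. lra.
Qed.
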